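(* Assume GCH. Let $\lambda<\kappa$ be infinite cardinals with $\mathrm{cf}(\kappa)\notin\{\mu^+ : \mathrm{cf}(\mu)=\omega\}$. Then every $(\lambda,\kappa)$-graph contains an $(\aleph_0,\kappa)$-subgraph, or otherwise a collection of pairwise disjoint $(\aleph_0,\kappa_i)$-subgraphs, $i<\mathrm{cf}(\kappa)$, where $\{\kappa_i : i<\mathrm{cf}(\kappa)\}$ is cofinal in $\kappa$.
   Context: For infinite cardinals $\lambda<\kappa$, a $(\lambda,\kappa)$-graph is a bipartite graph with bipartition $(A,B)$, $|A|=\lambda$, $|B|=\kappa$, in which every vertex $b\in B$ has infinitely many neighbours in $A$. An $(\aleph_0,\nu)$-subgraph of such a graph is a subgraph with bipartition $(C,D)$, $C\subseteq A$, $D\subseteq B$, which is itself an $(\aleph_0,\nu)$-graph. *)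

(* Defs.v *)
(* cardinals are represented by types, compared via injections. *)
From Stdlib Require Import List Classical.

Definition le_card (X Y : Type) : Prop :=
  exists f : X -> Y, forall x y, f x = f y -> x = y.

Definition eq_card (X Y : Type) : Prop :=
  exists f : X -> Y, (forall x y, f x = f y -> x = y) /\ (forall y, exists x, f x = y).

Definition lt_card (X Y : Type) : Prop := le_card X Y /\ ~ le_card Y X.

Definition finite_type (X : Type) : Prop := exists l : list X, forall x, In x l.
Definition infinite_type (X : Type) : Prop := ~ finite_type X.

Definition infinite_set {X : Type} (S : X -> Prop) : Prop :=
  ~ exists l : list X, forall x, S x -> In x l.

Definition sub {X : Type} (S : X -> Prop) : Type := {x : X | S x}.

Definition GCH : Prop :=
  forall X Y : Type, infinite_type X ->
    le_card X Y -> le_card Y (X -> Prop) ->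
    eq_card Y X \/ eq_card Y (X -> Prop).

Definition strict_well_order {X : Type} (R : X -> X -> Prop) : Prop :=
  (forall x, ~ R x x) /\
  (forall x y z, R x y -> R y z -> R x z) /\
  (forall x y, R x y \/ x = y \/ R y x) /\
  well_founded R.

(* R is a well-order of X of initial order type, i.e. X with R is (isomorphic
   to) the von Neumann cardinal |X|: every proper initial segment is smaller. *)
Definition initial_well_order {X : Type} (R : X -> X -> Prop) : Prop :=
  strict_well_order R /\ forall x : X, lt_card (sub (fun y => R y x)) X.

Definition cofinal_in {X : Type} (R : X -> X -> Prop) (S : X -> Prop) : Prop :=
  forall x, exists y, S y /\ (R x y \/ x = y).

Definition is_cf (X Y : Type) : Prop :=
  exists R : X -> X -> Prop, initial_well_order R /\
    (exists S : X -> Prop, cofinal_in R S /\ eq_card (sub S) Y) /\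
    (forall S : X -> Prop, cofinal_in R S -> le_card Y (sub S)).

Definition is_succ_card (M N : Type) : Prop :=
  lt_card M N /\ forall Z : Type, lt_card M Z -> le_card N Z.

(* A (lambda,kappa)-graph: bipartite graph given by the edge relation
   E : A -> B -> Prop between the sides A (|A| = lambda) and B (|B| = kappa),
   every b in B having infinitely many neighbours in A. *)
Definition bip_graph {A B : Type} (E : A -> B -> Prop) : Prop :=
  forall b : B, infinite_set (fun a => E a b).

(* (C, D) with C ⊆ A, D ⊆ B spans an (aleph_0, nu)-subgraph of E, where nu is
   the cardinality of the type N: |C| = aleph_0, |D| = nu, and every d in D has
   infinitely many neighbours in C. *)
Definition aleph0_subgraph {A B : Type} (E : A -> B -> Prop)
    (C : A -> Prop) (D : B -> Prop) (N : Type) : Prop :=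
  eq_card (sub C) nat /\ eq_card (sub D) N /\
  forall b, D b -> infinite_set (fun a => C a /\ E a b).

(* Main.v *)
Require Import Defs.
From Stdlib Require Import List Classical ClassicalEpsilon FunctionalExtensionality PropExtensionality Arith Lia FinFun Wellfounded.
From mathcomp Require boolp wochoice.

Lemma le_refl X : le_card X X.
Proof. exists (fun x => x); auto. Qed.

Lemma le_trans X Y Z : le_card X Y -> le_card Y Z -> le_card X Z.
Proof. intros [f Hf] [g Hg]; exists (fun x => g (f x)); auto. Qed.

Lemma eq_le X Y : eq_card X Y -> le_card X Y.
Proof. intros [f [Hf _]]; exists f; auto. Qed.

Lemma eq_refl' X : eq_card X X.
Proof. exists (fun x => x); split; eauto. Qed.

Lemma eq_sym X Y : eq_card X Y -> eq_card Y X.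
Proof.
  intros [f [Hi Hs]].
  exists (fun y => proj1_sig (constructive_indefinite_description _ (Hs y))).
  split.
  - intros y1 y2 E.
    destruct (constructive_indefinite_description _ (Hs y1)) as [x1 e1].
    destruct (constructive_indefinite_description _ (Hs y2)) as [x2 e2].
    simpl in E; subst; reflexivity.
  - intros x; exists (f x).
    destruct (constructive_indefinite_description _ (Hs (f x))) as [x1 e1]; simpl; auto.
Qed.

Lemma eq_trans X Y Z : eq_card X Y -> eq_card Y Z -> eq_card X Z.
Proof.
  intros [f [Hf Sf]] [g [Hg Sg]]; exists (fun x => g (f x)); split; auto.
  intros z; destruct (Sg z) as [y <-]; destruct (Sf y) as [x <-]; eauto.
Qed.

Lemma eq_ge X Y : eq_card X Y -> le_card Y X.
Proof. intros H; apply eq_le, eq_sym, H. Qed.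

Lemma le_sub X (P : X -> Prop) : le_card (sub P) X.
Proof.
  exists (@proj1_sig _ _); intros [x hx] [y hy]; simpl; intros <-.
  f_equal; apply proof_irrelevance.
Qed.

Lemma sub_eq X (P : X -> Prop) (x y : sub P) : proj1_sig x = proj1_sig y -> x = y.
Proof. destruct x, y; simpl; intros <-; f_equal; apply proof_irrelevance. Qed.

Lemma le_sub_sub X (P Q : X -> Prop) : (forall x, P x -> Q x) -> le_card (sub P) (sub Q).
Proof.
  intros H; exists (fun p => exist Q (proj1_sig p) (H _ (proj2_sig p))).
  intros a b E; apply sub_eq; injection E; auto.
Qed.

Lemma CB X Y : le_card X Y -> le_card Y X -> eq_card X Y.
Proof.
  intros [f Hf] [g Hg].
  set (C := fun x => exists n x0, (forall y, g y <> x0) /\ x = Nat.iter n (fun z => g (f z)) x0).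
  assert (Hng : forall x, ~ C x -> exists y, g y = x).
  { intros x Hx; apply NNPP; intros N; apply Hx; exists 0, x; split; simpl; auto.
    intros y E; apply N; eauto. }
  set (h := fun x => match excluded_middle_informative (C x) with
                     | left _ => f x
                     | right n => proj1_sig (constructive_indefinite_description _ (Hng x n)) end).
  exists h; split.
  - intros x1 x2; unfold h.
    destruct (excluded_middle_informative (C x1)) as [c1|c1];
    destruct (excluded_middle_informative (C x2)) as [c2|c2].
    + auto.
    + destruct (constructive_indefinite_description _ (Hng x2 c2)) as [y2 e2]; simpl.
      intros E; exfalso; apply c2; destruct c1 as [n [x0 [H0 E0]]].
      exists (S n), x0; split; auto. simpl; rewrite <- E0, <- e2, E; auto.
    + destruct (constructive_indefinite_description _ (Hng x1 c1)) as [y1 e1]; simpl.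
      intros E; exfalso; apply c1; destruct c2 as [n [x0 [H0 E0]]].
      exists (S n), x0; split; auto. simpl; rewrite <- E0, <- e1, E; auto.
    + destruct (constructive_indefinite_description _ (Hng x1 c1)) as [y1 e1];
      destruct (constructive_indefinite_description _ (Hng x2 c2)) as [y2 e2]; simpl.
      intros E; subst; auto.
  - intros y.
    destruct (classic (C (g y))) as [c|c].
    + destruct c as [n [x0 [H0 E0]]].
      destruct n as [|m].
      * simpl in E0; exfalso; apply (H0 y); auto.
      * simpl in E0; apply Hg in E0.
        exists (Nat.iter m (fun z => g (f z)) x0); unfold h.
        destruct (excluded_middle_informative _) as [c1|c1]; auto.
        exfalso; apply c1; exists m, x0; auto.
    + exists (g y); unfold h.
      destruct (excluded_middle_informative (C (g y))) as [c1|c1]; [contradiction|].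
      destruct (constructive_indefinite_description _ (Hng (g y) c1)) as [y1 e1]; simpl; auto.
Qed.

Lemma inf_nat X : infinite_type X -> le_card nat X.
Proof.
  intros H.
  assert (Hp : forall l : list X, exists x, ~ In x l).
  { intros l; apply NNPP; intros N; apply H; exists l; intros x; apply NNPP; intros N2; apply N; eauto. }
  set (pick := fun l => proj1_sig (constructive_indefinite_description _ (Hp l))).
  assert (Hpick : forall l, ~ In (pick l) l).
  { intros l; unfold pick; destruct (constructive_indefinite_description _ (Hp l)); auto. }
  set (g := fix g n := match n with 0 => nil | S n => pick (g n) :: g n end).
  assert (Hg : forall m n, m < n -> In (pick (g m)) (g n)).
  { intros m n; induction n; intros Hl; [lia|].
    simpl. destruct (Nat.eq_dec m n) as [->|Hne]; [left; auto|right; apply IHn; lia]. }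
  exists (fun n => pick (g n)).
  intros m n E.
  destruct (Nat.lt_trichotomy m n) as [l|[e|l]]; auto.
  - exfalso; apply (Hpick (g n)); rewrite <- E; auto.
  - exfalso; apply (Hpick (g m)); rewrite E; auto.
Qed.

Lemma nat_inf X : le_card nat X -> infinite_type X.
Proof.
  intros [f Hf] [l Hl].
  assert (ND : NoDup (map f (seq 0 (S (length l))))).
  { apply FinFun.Injective_map_NoDup; [exact Hf| apply seq_NoDup]. }
  assert (Inc : incl (map f (seq 0 (S (length l)))) l) by (intros x _; auto).
  pose proof (NoDup_incl_length ND Inc) as Hlen.
  rewrite length_map, length_seq in Hlen; lia.
Qed.

Lemma le_inf X Y : le_card X Y -> infinite_type X -> infinite_type Y.
Proof. intros H HX; apply nat_inf; eapply le_trans; [apply inf_nat|]; eauto. Qed.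

Lemma le_fin X Y : le_card X Y -> finite_type Y -> finite_type X.
Proof. intros H HY; apply NNPP; intros N; eapply le_inf; eauto. Qed.

Lemma infset_type X (S : X -> Prop) : infinite_set S -> infinite_type (sub S).
Proof.
  intros H [l Hl]; apply H; exists (map (@proj1_sig _ _) l).
  intros x hx; apply (in_map (@proj1_sig _ _) _ (exist _ x hx)); auto.
Qed.

Lemma type_infset X (S : X -> Prop) : infinite_type (sub S) -> infinite_set S.
Proof.
  intros H [l Hl]; apply H.
  exists (flat_map (fun x => match excluded_middle_informative (S x) with
                   | left h => exist S x h :: nil | right _ => nil end) l).
  intros [x hx]; apply in_flat_map; exists x; split; auto.
  destruct (excluded_middle_informative (S x)) as [h|h]; [|contradiction].
  left; apply sub_eq; reflexivity.
Qed.

Lemma cnt_infset X (P : X -> Prop) : eq_card (sub P) nat -> infinite_set P.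
Proof. intros H; apply type_infset, nat_inf, eq_ge, H. Qed.

Lemma infset_cnt X (S : X -> Prop) : infinite_set S ->
  exists P : X -> Prop, (forall x, P x -> S x) /\ eq_card (sub P) nat.
Proof.
  intros H; destruct (inf_nat _ (infset_type _ _ H)) as [f Hf].
  exists (fun x => exists n, proj1_sig (f n) = x); split.
  - intros x [n <-]; apply (proj2_sig (f n)).
  - apply eq_sym.
    exists (fun n => exist (fun x => exists n, proj1_sig (f n) = x) (proj1_sig (f n)) (ex_intro _ n eq_refl)).
    split.
    + intros m n E; apply Hf, sub_eq; injection E; auto.
    + intros [x [n <-]]; exists n; apply sub_eq; reflexivity.
Qed.

Module WOM.
From mathcomp Require Import ssreflect ssrbool eqtype boolp wochoice.
Lemma wo_raw (X : Type) : exists R : X -> X -> bool,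
  (forall A : X -> bool, (exists x, A x) -> exists z, A z /\ forall y, A y -> R z y) /\
  (forall x y, R x y -> R y x -> x = y).
Proof.
  have [R HR] := well_ordering_principle {classic X}.
  have refl : forall x, R x x.
    move=> x.
    pose A := (fun z : {classic X} => `[< z = x >]).
    have ne : nonempty (A : {pred {classic X}}) by exists x; apply/asboolP.
    have [z [[/asboolP Az Hz] U]] := HR _ ne.
    by move: (Hz x); rewrite Az; apply; apply/asboolP.
  exists R; split.
  - move=> A [x Ax].
    have [z [[Az Hz] _]] := HR (A : {pred {classic X}}) (ex_intro _ x Ax).
    exists z; split => // y Ay; exact: Hz.
  - move=> x y Rxy Ryx.
    pose A := (fun z : {classic X} => `[< z = x \/ z = y >]).
    have ne : nonempty (A : {pred {classic X}}) by exists x; apply/asboolP; left.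
    have [z [[Az Hz] U]] := HR _ ne.
    have Ux : z = x.
      apply: U; split; first by apply/asboolP; left.
      by move=> w /asboolP [->|->].
    have Uy : z = y.
      apply: U; split; first by apply/asboolP; right.
      by move=> w /asboolP [->|->].
    by rewrite -Ux -Uy.
Qed.

End WOM.



Definition bP (P : Prop) : bool := if excluded_middle_informative P then true else false.
Lemma bP_spec P : bP P = true <-> P.
Proof. unfold bP; destruct (excluded_middle_informative P); split; auto; discriminate. Qed.

Lemma wo_exists (X : Type) : exists R : X -> X -> Prop, strict_well_order R.
Proof.
  destruct (WOM.wo_raw X) as [R [Hmin Hanti]].
  assert (Hmin' : forall P : X -> Prop, (exists x, P x) -> exists z, P z /\ forall y, P y -> R z y = true).
  { intros P [x Px]. destruct (Hmin (fun z => bP (P z))) as [z [Pz Hz]].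
    - exists x; apply bP_spec; auto.
    - exists z; split; [apply bP_spec; auto|]. intros y Py; apply Hz, bP_spec; auto. }
  assert (Htot : forall x y, R x y = true \/ R y x = true).
  { intros x y; destruct (Hmin' (fun z => z = x \/ z = y)) as [z [[->| ->] Hz]]; eauto. }
  exists (fun x y => R x y = true /\ x <> y).
  split; [|split; [|split]].
  - intros x [_ H]; auto.
  - intros x y z [Rxy nxy] [Ryz nyz].
    destruct (Hmin' (fun w => w = x \/ w = y \/ w = z)) as [m [Hm Hm2]]; eauto.
    destruct Hm as [->|[->| ->]].
    + split; [apply Hm2; auto|]. intros ->. apply nxy, Hanti; auto.
    + exfalso; apply nxy, Hanti; auto.
    + exfalso; apply nyz, Hanti; auto.
  - intros x y. destruct (classic (x = y)) as [e|n]; auto.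
    destruct (Htot x y); [left|right; right]; split; auto.
  - intros x. apply NNPP; intros Hx.
    destruct (Hmin' (fun z => ~ Acc (fun x y => R x y = true /\ x <> y) z)) as [m [Hm Hm2]]; eauto.
    apply Hm; constructor; intros y [Ryx nyx].
    apply NNPP; intros Hy. apply nyx, Hanti; auto.
Qed.

Lemma wf_min X (R : X -> X -> Prop) : well_founded R -> forall P : X -> Prop,
  (exists x, P x) -> exists x, P x /\ forall y, P y -> ~ R y x.
Proof.
  intros wf P [x Px]. apply NNPP; intros N.
  assert (forall z, ~ P z).
  { intros z; induction (wf z) as [z _ IH]. intros Pz; apply N; exists z; split; auto.
    intros y Py Ryz; apply (IH y Ryz Py). }
  eapply H; eauto.
Qed.

Lemma wf_rec X T (R : X -> X -> Prop) (wf : well_founded R) (d : T)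
  (F : X -> (X -> T) -> T)
  (Fext : forall x g h, (forall y, R y x -> g y = h y) -> F x g = F x h) :
  exists f : X -> T, forall x, f x = F x f.
Proof.
  set (G := fun x (prev : forall y, R y x -> T) =>
    F x (fun y => match excluded_middle_informative (R y x) with
                  | left h => prev y h | right _ => d end)).
  exists (Fix wf (fun _ => T) G).
  intros x. rewrite Fix_eq.
  - unfold G at 1. apply Fext. intros y Ryx.
    destruct (excluded_middle_informative (R y x)); [reflexivity|contradiction].
  - intros z f g Hfg. unfold G. f_equal. extensionality y.
    destruct (excluded_middle_informative (R y z)); auto.
Qed.

Lemma wo_pull X Y (f : X -> Y) (R : Y -> Y -> Prop) :
  (forall a b, f a = f b -> a = b) -> strict_well_order R ->
  strict_well_order (fun a b => R (f a) (f b)).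
Proof.
  intros Hf [Hirr [Htr [Hto Hwf]]]; split; [|split; [|split]].
  - intros x; apply Hirr.
  - intros x y z; apply Htr.
  - intros x y; destruct (Hto (f x) (f y)) as [h|[h|h]]; auto.
  - apply wf_inverse_image, Hwf.
Qed.

Definition lexR {X Y} (R1 : X -> X -> Prop) (R2 : Y -> Y -> Prop) (p q : X * Y) : Prop :=
  R1 (fst p) (fst q) \/ (fst p = fst q /\ R2 (snd p) (snd q)).

Lemma wo_lex X Y (R1 : X -> X -> Prop) (R2 : Y -> Y -> Prop) :
  strict_well_order R1 -> strict_well_order R2 -> strict_well_order (lexR R1 R2).
Proof.
  intros [I1 [T1 [O1 W1]]] [I2 [T2 [O2 W2]]]; unfold lexR; split; [|split; [|split]].
  - intros [x y] [h|[_ h]]; simpl in *; [eapply I1|eapply I2]; eauto.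
  - intros [x1 y1] [x2 y2] [x3 y3]; simpl.
    intros [h|[-> h]] [h'|[-> h']]; eauto.
  - intros [x1 y1] [x2 y2]; simpl.
    destruct (O1 x1 x2) as [h|[->|h]]; auto.
    destruct (O2 y1 y2) as [h|[->|h]]; auto.
  - intros [x y]. revert y. induction (W1 x) as [x _ IHx]. intros y.
    induction (W2 y) as [y _ IHy]. constructor. intros [x' y'] [h|[e h]]; simpl in *.
    + apply IHx; auto.
    + subst; apply IHy; auto.
Qed.

Section CT.
Variables (X Y : Type) (RX : X -> X -> Prop) (RY : Y -> Y -> Prop).
Hypothesis HX : strict_well_order RX.
Hypothesis HY : strict_well_order RY.

Definition Fmk (C : Prop) (U : Y -> Prop) : option Y :=
  match excluded_middle_informative (C /\ exists y, U y) with
  | left h => Some (proj1_sig (constructive_indefinite_description _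
                 (wf_min _ RY (proj2 (proj2 (proj2 HY))) U (proj2 h))))
  | right _ => None end.

Lemma Fmk_some C U y : Fmk C U = Some y -> C /\ U y /\ forall z, U z -> ~ RY z y.
Proof.
  unfold Fmk; destruct (excluded_middle_informative _) as [h|h]; [|discriminate].
  destruct (constructive_indefinite_description _ _) as [y0 [H1 H2]]; simpl.
  intros E; injection E; intros <-; split; [apply h|auto].
Qed.

Lemma Fmk_none C U : Fmk C U = None -> ~ (C /\ exists y, U y).
Proof.
  unfold Fmk; destruct (excluded_middle_informative _) as [h|h]; [discriminate|auto].
Qed.

Definition condF (g : X -> option Y) x := forall x', RX x' x -> g x' <> None.
Definition ubF (g : X -> option Y) x y := forall x', RX x' x -> forall y', g x' = Some y' -> RY y' y.
Definition FF x g := Fmk (condF g x) (ubF g x).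

Lemma CT : le_card X Y \/ exists x0, eq_card (sub (fun x => RX x x0)) Y.
Proof.
  destruct HX as [IX [TX [OX WX]]]. destruct HY as [IY [TY [OY WY]]].
  destruct (wf_rec X (option Y) RX WX None FF) as [f Hf].
  { intros x g h E. unfold FF.
    assert (E1 : condF g x = condF h x).
    { apply propositional_extensionality; unfold condF; split; intros H x' r; rewrite ?E in *; auto;
      rewrite <- E; auto. }
    assert (E2 : ubF g x = ubF h x).
    { extensionality y; apply propositional_extensionality; unfold ubF; split; intros H x' r y' e;
      apply (H x' r); rewrite ?E in *; auto; rewrite <- E in e; auto. }
    rewrite E1, E2; reflexivity. }
  assert (P1 : forall x y, f x = Some y -> forall x', RX x' x -> exists y', f x' = Some y' /\ RY y' y).
  { intros x y e x' r. rewrite Hf in e. apply Fmk_some in e as [C [U _]].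
    destruct (f x') as [y'|] eqn:E'; [|exfalso; apply (C x' r); auto].
    exists y'; split; auto. apply (U x' r); auto. }
  assert (P2 : forall x, f x = None -> forall x2, RX x x2 -> f x2 = None).
  { intros x e x2 r. destruct (f x2) as [y|] eqn:E; auto.
    rewrite Hf in E. apply Fmk_some in E as [C _]. exfalso; apply (C x r); auto. }
  assert (P3 : forall x y, f x = Some y -> forall z, RY z y -> exists x', RX x' x /\ f x' = Some z).
  { intros x; induction (WX x) as [x _ IH]; intros y e z rz.
    pose proof e as e'. rewrite Hf in e'. apply Fmk_some in e' as [C [U M]].
    assert (nU : ~ ubF f x z) by (intros Hu; apply (M z Hu); auto).
    unfold ubF in nU. apply NNPP; intros N. apply nU. intros x' r y' e2.
    destruct (OY y' z) as [h|[h|h]]; auto.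
    - subst; exfalso; apply N; eauto.
    - destruct (IH x' r y' e2 z h) as [x'' [r'' e'']]. exfalso; apply N; exists x''; split; eauto. }
  assert (P4 : forall x1 x2 y, f x1 = Some y -> f x2 = Some y -> x1 = x2).
  { intros x1 x2 y e1 e2. destruct (OX x1 x2) as [h|[h|h]]; auto.
    - destruct (P1 _ _ e2 _ h) as [y' [e' r]]. rewrite e1 in e'; injection e'; intros ->. exfalso; eapply IY; eauto.
    - destruct (P1 _ _ e1 _ h) as [y' [e' r]]. rewrite e2 in e'; injection e'; intros ->. exfalso; eapply IY; eauto. }
  destruct (classic (exists x, f x = None)) as [[x0 e0]|N].
  - right. destruct (wf_min X RX WX (fun x => f x = None)) as [m [em Hm]]; eauto.
    assert (Hs : forall x : sub (fun x => RX x m), exists y, f (proj1_sig x) = Some y).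
    { intros [x r]; simpl. destruct (f x) as [y|] eqn:E; eauto. exfalso; eapply Hm; eauto. }
    exists m.
    exists (fun x => proj1_sig (constructive_indefinite_description _ (Hs x))). split.
    + intros a b. destruct (constructive_indefinite_description _ (Hs a)) as [ya ea].
      destruct (constructive_indefinite_description _ (Hs b)) as [yb eb]. simpl; intros <-.
      apply sub_eq. eapply P4; eauto.
    + intros y. pose proof em as em'. rewrite Hf in em'. apply Fmk_none in em'.
      assert (C : condF f m).
      { intros x' r E. eapply Hm; eauto. }
      assert (nU : ~ ubF f m y) by (intros Hu; apply em'; split; eauto).
      assert (Hex : exists x, RX x m /\ f x = Some y).
      { apply NNPP; intros N. apply nU. intros x' r y' e2.
        destruct (OY y' y) as [h|[h|h]]; auto.
        - subst; exfalso; apply N; eauto.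
        - destruct (P3 x' y' e2 y h) as [x'' [r'' e'']]. exfalso; apply N; exists x''; split; eauto. }
      destruct Hex as [x [r e]]. exists (exist _ x r).
      destruct (constructive_indefinite_description _ _) as [y' e']; simpl in *. congruence.
  - left. assert (Hs : forall x, exists y, f x = Some y).
    { intros x; destruct (f x) eqn:E; eauto. exfalso; apply N; eauto. }
    exists (fun x => proj1_sig (constructive_indefinite_description _ (Hs x))).
    intros a b. destruct (constructive_indefinite_description _ (Hs a)) as [ya ea].
    destruct (constructive_indefinite_description _ (Hs b)) as [yb eb]. simpl; intros <-.
    eapply P4; eauto.
Qed.
End CT.

Lemma comparable X Y : le_card X Y \/ le_card Y X.
Proof.
  destruct (wo_exists X) as [RX HX]. destruct (wo_exists Y) as [RY HY].
  destruct (CT X Y RX RY HX HY) as [H|[x0 H]]; auto.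
  right. eapply le_trans; [apply eq_ge, H|apply le_sub].
Qed.

Lemma lt_iff X Y : lt_card X Y <-> ~ le_card Y X.
Proof.
  split; [intros [_ H]; auto|]. intros H; split; auto.
  destruct (comparable X Y); auto; contradiction.
Qed.

Lemma nlt_le X Y : ~ lt_card X Y -> le_card Y X.
Proof. intros H; apply NNPP; intros N; apply H, lt_iff, N. Qed.

Lemma lt_le X Y : lt_card X Y -> le_card X Y.
Proof. intros [H _]; auto. Qed.

Lemma le_lt_trans X Y Z : le_card X Y -> lt_card Y Z -> lt_card X Z.
Proof.
  intros H1 H2; apply lt_iff; intros H3. apply lt_iff in H2. apply H2. eapply le_trans; eauto.
Qed.

Lemma lt_le_trans X Y Z : lt_card X Y -> le_card Y Z -> lt_card X Z.
Proof.
  intros H1 H2; apply lt_iff; intros H3. apply lt_iff in H1. apply H1. eapply le_trans; eauto.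
Qed.

Lemma lt_irrefl X : ~ lt_card X X.
Proof. intros [_ H]; apply H, le_refl. Qed.

Lemma init_exists X : exists R : X -> X -> Prop, initial_well_order R.
Proof.
  destruct (wo_exists X) as [W HW].
  destruct (classic (exists x, le_card X (sub (fun y => W y x)))) as [Hx|N].
  - destruct (wf_min X W (proj2 (proj2 (proj2 HW))) _ Hx) as [x0 [H0 Hmin]].
    set (V := sub (fun y => W y x0)).
    set (WV := fun a b : V => W (proj1_sig a) (proj1_sig b)).
    assert (HWV : strict_well_order WV).
    { unfold WV; apply (wo_pull V X (@proj1_sig _ _) W); auto. intros a b; apply sub_eq. }
    assert (EV : eq_card X V) by (apply CB; auto; apply le_sub).
    destruct EV as [phi [Pi Ps]].
    exists (fun a b => WV (phi a) (phi b)). split.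
    + apply wo_pull; auto.
    + intros x. apply lt_iff. intros Hle.
      apply (Hmin (proj1_sig (phi x))); [|apply (proj2_sig (phi x))].
      eapply le_trans; [exact Hle|].
      exists (fun y => exist (fun z => W z (proj1_sig (phi x))) (proj1_sig (phi (proj1_sig y))) (proj2_sig y)).
      intros a b E; injection E; intros E'. apply sub_eq, Pi, sub_eq; auto.
  - exists W; split; auto. intros x. apply lt_iff. intros H; apply N; eauto.
Qed.

Lemma seg_of_lt B (R : B -> B -> Prop) Z : initial_well_order R -> lt_card Z B ->
  exists x, eq_card Z (sub (fun y => R y x)).
Proof.
  intros [HR _] HZ. destruct (wo_exists Z) as [W HW].
  destruct (CT B Z R W HR HW) as [H|[x0 H]].
  - exfalso; apply lt_iff in HZ; auto.
  - exists x0; apply eq_sym; auto.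
Qed.

Lemma opt_le Z : infinite_type Z -> le_card (option Z) Z.
Proof.
  intros HZ. destruct (inf_nat _ HZ) as [f Hf].
  exists (fun o => match o with None => f 0 | Some z =>
    match excluded_middle_informative (exists n, f n = z) with
    | left e => f (S (proj1_sig (constructive_indefinite_description _ e))) | right _ => z end end).
  intros [z1|] [z2|]; auto.
  - destruct (excluded_middle_informative (exists n, f n = z1)) as [e1|e1];
    destruct (excluded_middle_informative (exists n, f n = z2)) as [e2|e2].
    + destruct (constructive_indefinite_description _ e1) as [n1 h1];
      destruct (constructive_indefinite_description _ e2) as [n2 h2]; simpl.
      intros E; apply Hf in E; injection E; intros ->; congruence.
    + destruct (constructive_indefinite_description _ e1) as [n1 h1]; simpl.
      intros E; exfalso; apply e2; eauto.
    + destruct (constructive_indefinite_description _ e2) as [n2 h2]; simpl.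
      intros E; exfalso; apply e1; eauto.
    + congruence.
  - destruct (excluded_middle_informative (exists n, f n = z1)) as [e1|e1].
    + destruct (constructive_indefinite_description _ e1) as [n1 h1]; simpl.
      intros E; apply Hf in E; discriminate.
    + intros E; exfalso; apply e1; eauto.
  - destruct (excluded_middle_informative (exists n, f n = z2)) as [e2|e2].
    + destruct (constructive_indefinite_description _ e2) as [n2 h2]; simpl.
      intros E; apply Hf in E; discriminate.
    + intros E; exfalso; apply e2; eauto.
Qed.

Lemma le_opt Z : le_card Z (option Z).
Proof. exists (@Some Z); intros a b E; injection E; auto. Qed.

Lemma no_max B (R : B -> B -> Prop) : initial_well_order R -> infinite_type B ->
  forall s, exists t, R s t.
Proof.
  intros [[I [T [O W]]] Hseg] HB s. apply NNPP; intros N.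
  assert (Hall : forall t, R t s \/ t = s).
  { intros t; destruct (O t s) as [h|[h|h]]; auto. exfalso; eauto. }
  assert (Hinf : infinite_type (sub (fun y => R y s))).
  { intros [l Hl]. apply HB. exists (s :: map (@proj1_sig _ _) l).
    intros t. destruct (Hall t) as [h| ->]; [right|left; auto].
    apply (in_map (@proj1_sig _ _) _ (exist _ t h)); auto. }
  apply (proj2 (Hseg s)).
  eapply le_trans; [|apply opt_le; auto].
  exists (fun t => match excluded_middle_informative (R t s) with
                   | left h => Some (exist _ t h) | right _ => None end).
  intros a b.
  destruct (excluded_middle_informative (R a s)) as [ha|ha];
  destruct (excluded_middle_informative (R b s)) as [hb|hb]; try discriminate.
  - intros E; injection E; auto.
  - intros _. destruct (Hall a), (Hall b); try contradiction; congruence.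
Qed.

Lemma cseg_lt B (R : B -> B -> Prop) : initial_well_order R -> infinite_type B ->
  forall s, lt_card (sub (fun y => R y s \/ y = s)) B.
Proof.
  intros HR HB s. destruct (no_max B R HR HB s) as [t Rt].
  eapply le_lt_trans; [|apply (proj2 HR t)].
  apply le_sub_sub. destruct HR as [[I [T _]] _].
  intros y [h| ->]; eauto.
Qed.

Definition seg {X} (R : X -> X -> Prop) x := sub (fun y => R y x).
Definition cseg {X} (R : X -> X -> Prop) x := sub (fun y => R y x \/ y = x).

Lemma fin_prod X Y : finite_type X -> finite_type Y -> finite_type (X * Y).
Proof. intros [l1 H1] [l2 H2]; exists (list_prod l1 l2); intros [a b]; apply in_prod; auto. Qed.

Lemma fin_opt X : finite_type X -> finite_type (option X).
Proof. intros [l H]; exists (None :: map Some l); intros [x|]; [right; apply in_map; auto|left; auto]. Qed.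

Lemma fin_lt X B : finite_type X -> infinite_type B -> lt_card X B.
Proof. intros HX HB; apply lt_iff; intros H; apply HB; eapply le_fin; eauto. Qed.

Lemma prod_mono X Y X' Y' : le_card X X' -> le_card Y Y' -> le_card (X * Y) (X' * Y').
Proof.
  intros [f Hf] [g Hg]; exists (fun p => (f (fst p), g (snd p))).
  intros [a b] [c d] E; injection E; intros; f_equal; auto.
Qed.

Lemma prod_transfer U V : eq_card U V -> le_card (U * U) U -> le_card (V * V) V.
Proof.
  intros E H. eapply le_trans; [apply prod_mono; apply eq_ge, E|].
  eapply le_trans; [exact H|apply eq_le, E].
Qed.

Section Godel.
Variables (Y : Type) (R : Y -> Y -> Prop).
Hypothesis HR : initial_well_order R.
Hypothesis HY : infinite_type Y.

Definition mx a b := if excluded_middle_informative (R a b) then b else a.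
Definition GR (p q : Y * Y) : Prop :=
  lexR R (lexR R R) (mx (fst p) (snd p), p) (mx (fst q) (snd q), q).

Lemma GR_wo : strict_well_order GR.
Proof.
  destruct HR as [W _].
  apply (wo_pull (Y*Y) (Y*(Y*Y)) (fun p => (mx (fst p) (snd p), p))).
  - intros a b E; injection E; auto.
  - apply wo_lex; auto. apply wo_lex; auto.
Qed.

Lemma mx_ge a b : (R a (mx a b) \/ a = mx a b) /\ (R b (mx a b) \/ b = mx a b).
Proof.
  destruct HR as [[I [T [O _]]] _]. unfold mx.
  destruct (excluded_middle_informative (R a b)); auto.
  destruct (O a b) as [h|[h|h]]; auto; contradiction.
Qed.

Lemma hess_step : (forall y, infinite_type (cseg R y) -> le_card (cseg R y * cseg R y) (cseg R y)) ->
  le_card (Y * Y) Y.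
Proof.
  intros H.
  destruct (CT (Y*Y) Y GR R GR_wo (proj1 HR)) as [h|[p Hp]]; auto.
  exfalso.
  set (m := mx (fst p) (snd p)).
  assert (Hc : forall q, GR q p -> (R (fst q) m \/ fst q = m) /\ (R (snd q) m \/ snd q = m)).
  { destruct HR as [[I [T [O _]]] _].
    intros q Hq. destruct (mx_ge (fst q) (snd q)) as [h1 h2].
    assert (Hm : R (mx (fst q) (snd q)) m \/ mx (fst q) (snd q) = m).
    { unfold GR, lexR in Hq; simpl in Hq. destruct Hq as [h|[h _]]; auto. }
    split; [destruct h1 as [h1|h1]|destruct h2 as [h2|h2]]; destruct Hm as [hm|hm];
      try rewrite <- hm; eauto; try (rewrite h1; auto); try (rewrite h2; auto). }
  assert (Hle : le_card Y (cseg R m * cseg R m)).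
  { eapply le_trans; [apply eq_ge, Hp|].
    exists (fun q => (exist (fun y => R y m \/ y = m) (fst (proj1_sig q)) (proj1 (Hc _ (proj2_sig q))),
                      exist (fun y => R y m \/ y = m) (snd (proj1_sig q)) (proj2 (Hc _ (proj2_sig q))))).
    intros [[a b] ha] [[c d] hc] E; injection E; simpl; intros; subst. apply sub_eq; auto. }
  destruct (classic (finite_type (cseg R m))) as [Hf|Hi].
  - apply HY. eapply le_fin; [exact Hle|apply fin_prod; auto].
  - apply (proj2 (cseg_lt Y R HR HY m)). eapply le_trans; [exact Hle|apply H; auto].
Qed.
End Godel.

Lemma hessenberg X : infinite_type X -> le_card (X * X) X.
Proof.
  intros HX. destruct (init_exists X) as [R HR].
  assert (Claim : forall m, infinite_type (seg R m) -> le_card (seg R m * seg R m) (seg R m)).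
  { destruct HR as [[I [T [O W]]] Hs] eqn:EHR.
    intros m; induction (W m) as [m _ IH]; intros Hinf.
    destruct (init_exists (seg R m)) as [RY HRY].
    apply (hess_step _ RY HRY Hinf).
    intros y Hy.
    assert (L1 : lt_card (cseg RY y) (seg R m)) by (apply cseg_lt; auto).
    assert (L2 : lt_card (cseg RY y) X).
    { eapply lt_le_trans; [exact L1|apply le_sub]. }
    destruct (seg_of_lt X R _ HR L2) as [m' Em'].
    assert (Rm : R m' m).
    { destruct (O m' m) as [h|[h|h]]; auto; exfalso; apply (proj2 L1).
      - subst. apply eq_le, eq_sym, Em'.
      - eapply le_trans; [|apply eq_ge, Em']. apply le_sub_sub; eauto. }
    apply (prod_transfer (seg R m')); [apply eq_sym; auto|].
    apply IH; auto. intros Hf. apply Hy. eapply le_fin; [apply eq_le, Em'|auto]. }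
  apply (hess_step X R HR HX). intros y Hy.
  destruct (seg_of_lt X R _ HR (cseg_lt X R HR HX y)) as [m' Em'].
  apply (prod_transfer (seg R m')); [apply eq_sym; auto|].
  apply Claim. intros Hf. apply Hy. eapply le_fin; [apply eq_le, Em'|auto].
Qed.

Lemma prod_le M X Y : infinite_type M -> le_card X M -> le_card Y M -> le_card (X * Y) M.
Proof. intros HM H1 H2; eapply le_trans; [apply prod_mono; eauto|apply hessenberg; auto]. Qed.

Lemma prod_lt B X Y : infinite_type B -> lt_card X B -> lt_card Y B -> lt_card (X * Y) B.
Proof.
  intros HB H1 H2.
  assert (K : forall M, le_card X M -> le_card Y M -> lt_card M B -> lt_card (X * Y) B).
  { intros M h1 h2 h3. destruct (classic (finite_type M)) as [Hf|Hi].
    - apply fin_lt; auto. apply fin_prod; eapply le_fin; eauto.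
    - eapply le_lt_trans; [apply prod_le; eauto|auto]. }
  destruct (comparable X Y) as [h|h].
  - apply (K Y); auto. apply le_refl.
  - apply (K X); auto. apply le_refl.
Qed.

Lemma opt_lt B X : infinite_type B -> lt_card X B -> lt_card (option X) B.
Proof.
  intros HB H. destruct (classic (finite_type X)) as [Hf|Hi].
  - apply fin_lt; auto; apply fin_opt; auto.
  - eapply le_lt_trans; [apply opt_le; auto|auto].
Qed.

Lemma sum_lt B X Y : infinite_type B -> lt_card X B -> lt_card Y B -> lt_card (X + Y) B.
Proof.
  intros HB H1 H2. eapply le_lt_trans; [|apply (prod_lt B (option X) (option Y)); auto; apply opt_lt; auto].
  exists (fun s => match s with inl x => (Some x, None) | inr y => (None, Some y) end).
  intros [a|a] [b|b] E; injection E; intros; subst; auto; discriminate.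
Qed.

Lemma nat_inf' : infinite_type nat.
Proof. apply nat_inf, le_refl. Qed.

Lemma sigma_le W J K V (P : J -> V -> Prop) (h : W -> J) (v : W -> V) :
  (forall j, le_card (sub (P j)) K) -> (forall w, P (h w) (v w)) ->
  (forall w w', h w = h w' -> v w = v w' -> w = w') -> le_card W (J * K).
Proof.
  intros HK Hp Hinj.
  set (e := fun j => proj1_sig (constructive_indefinite_description _ (HK j))).
  assert (He : forall j a b, e j a = e j b -> a = b).
  { intros j; unfold e; destruct (constructive_indefinite_description _ (HK j)); auto. }
  exists (fun w => (h w, e (h w) (exist _ (v w) (Hp w)))).
  intros w w' E. injection E; intros E2 E1.
  assert (L : forall j1 j2 (a : sub (P j1)) (b : sub (P j2)), j1 = j2 -> e j1 a = e j2 b ->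
            proj1_sig a = proj1_sig b).
  { intros j1 j2 a b <- E'. apply He in E'. subst; auto. }
  apply Hinj; auto. apply (L _ _ _ _ E1 E2).
Qed.

Definition cf_data {B} (R : B -> B -> Prop) (S0 : B -> Prop) :=
  initial_well_order R /\ cofinal_in R S0 /\ forall S, cofinal_in R S -> le_card (sub S0) (sub S).

Lemma cf_exists B : infinite_type B -> exists R S0, @cf_data B R S0.
Proof.
  intros HB. destruct (init_exists B) as [R HR].
  exists R.
  destruct (classic (exists x, exists S, cofinal_in R S /\ le_card (sub S) (seg R x))) as [Hx|N].
  - pose proof HR as [[I [T [O W]]] Hs].
    destruct (wf_min B R W _ Hx) as [x0 [[S0 [C0 L0]] Hmin]].
    exists S0; split; [exact HR|split; [exact C0|]].
    intros S CS. destruct (classic (lt_card (sub S) B)) as [Hl|Hn].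
    + destruct (seg_of_lt B R _ HR Hl) as [x Ex].
      assert (Hx0 : R x0 x \/ x0 = x).
      { destruct (O x0 x) as [h|[h|h]]; auto. exfalso; apply (Hmin x); auto.
        exists S; split; auto; apply eq_le; auto. }
      eapply le_trans; [exact L0|]. eapply le_trans; [|apply eq_ge, Ex].
      apply le_sub_sub. intros y hy; destruct Hx0 as [h| <-]; eauto.
    + apply nlt_le in Hn. eapply le_trans; [apply le_sub|auto].
  - exists (fun _ => True). split; [auto|split].
    + intros x; exists x; auto.
    + intros S CS. eapply le_trans; [apply le_sub|].
      apply nlt_le; intros Hl. destruct (seg_of_lt B R _ HR Hl) as [x Ex].
      apply N; exists x, S; split; auto; apply eq_le; auto.
Qed.

Lemma cf_is_cf B R S0 : @cf_data B R S0 -> is_cf B (sub S0).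
Proof.
  intros [HR [C M]]. exists R; split; auto. split; auto.
  exists S0; split; auto. apply eq_refl'.
Qed.

Lemma cf_le B R S0 : @cf_data B R S0 -> le_card (sub S0) B.
Proof. intros _; apply le_sub. Qed.

Lemma union_lt B R S0 J (X : J -> B -> Prop) : @cf_data B R S0 -> infinite_type B ->
  lt_card J (sub S0) -> (forall j, lt_card (sub (X j)) B) ->
  lt_card (sub (fun b => exists j, X j b)) B.
Proof.
  intros [HR [C0 M0]] HB HJ HX.
  assert (Hy : forall j, exists y, eq_card (sub (X j)) (seg R y)).
  { intros j; apply (seg_of_lt B R _ HR (HX j)). }
  set (yf := fun j => proj1_sig (constructive_indefinite_description _ (Hy j))).
  assert (Hyf : forall j, eq_card (sub (X j)) (seg R (yf j))).
  { intros j; unfold yf; destruct (constructive_indefinite_description _ (Hy j)); auto. }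
  destruct (classic (cofinal_in R (fun y => exists j, yf j = y))) as [Cf|NCf].
  - exfalso. apply lt_iff in HJ. apply HJ. eapply le_trans; [apply M0, Cf|].
    exists (fun s : sub (fun y => exists j, yf j = y) =>
      proj1_sig (constructive_indefinite_description (fun j => yf j = proj1_sig s) (proj2_sig s))).
    intros a b. destruct (constructive_indefinite_description _ (proj2_sig a)) as [ja ea].
    destruct (constructive_indefinite_description _ (proj2_sig b)) as [jb eb]. simpl.
    intros <-. apply sub_eq; congruence.
  - assert (Hx : exists x, forall j, R (yf j) x).
    { apply NNPP; intros N. apply NCf. intros x. apply NNPP; intros N2.
      apply N; exists x; intros j. destruct HR as [[I [T [O _]]] _].
      destruct (O (yf j) x) as [h|[h|h]]; auto; exfalso; apply N2; eauto. }
    destruct Hx as [x Hx].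
    assert (Hw : forall w : sub (fun b => exists j, X j b), exists j, X j (proj1_sig w)).
    { intros [b hb]; auto. }
    eapply le_lt_trans.
    + apply (sigma_le _ J (seg R x) B X
         (fun w => proj1_sig (constructive_indefinite_description _ (Hw w))) (@proj1_sig _ _)).
      * intros j. eapply le_trans; [apply eq_le, Hyf|]. apply le_sub_sub.
        destruct HR as [[I [T _]] _]. intros y hy; eauto.
      * intros w; destruct (constructive_indefinite_description _ (Hw w)); auto.
      * intros w w' _ E; apply sub_eq; auto.
    + apply prod_lt; auto.
      * eapply lt_le_trans; [exact HJ|apply le_sub].
      * apply (proj2 HR).
Qed.

Definition Pow X := X -> Prop.

Lemma le_pow X : le_card X (Pow X).
Proof. exists (fun x y => x = y); intros a b E. pose proof (equal_f E b) as H. simpl in H. rewrite H; auto. Qed.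

Lemma cantor X : ~ le_card (Pow X) X.
Proof.
  intros [f Hf]. set (D := fun x => exists P, f P = x /\ ~ P x).
  destruct (classic (D (f D))) as [h|h].
  - pose proof h as [P [E nP]]. apply Hf in E. subst P. apply nP, h.
  - apply h. exists D; auto.
Qed.

Lemma gch_succ X Z : GCH -> infinite_type X -> lt_card X Z -> le_card (Pow X) Z.
Proof.
  intros G HX HZ. destruct (comparable (Pow X) Z) as [h|h]; auto.
  destruct (G X Z HX (lt_le _ _ HZ) h) as [E|E].
  - exfalso; apply (proj2 HZ), eq_le, E.
  - apply eq_ge, E.
Qed.

Definition CS X := sub (fun P : X -> Prop => eq_card (sub P) nat).

Lemma cs_le X (R : X -> X -> Prop) : GCH -> infinite_type X -> initial_well_order R ->
  (forall P, eq_card (sub P) nat -> exists x, forall y, P y -> R y x) -> le_card (CS X) X.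
Proof.
  intros G HX HR Hb.
  assert (Hb' : forall c : CS X, exists x, forall y, proj1_sig c y -> R y x).
  { intros [P hP]; apply Hb; auto. }
  eapply le_trans; [|apply (hessenberg X HX)].
  apply (sigma_le _ X X (X -> Prop) (fun j Q => (forall y, Q y -> R y j) /\ eq_card (sub Q) nat)
          (fun c => proj1_sig (constructive_indefinite_description _ (Hb' c))) (@proj1_sig _ _)).
  - intros j. destruct (classic (finite_type (seg R j))) as [Hf|Hi].
    + assert (E : forall a : sub (fun Q => (forall y, Q y -> R y j) /\ eq_card (sub Q) nat), False).
      { intros [Q [h1 h2]]. apply (cnt_infset _ _ h2). destruct Hf as [l Hl].
        exists (map (@proj1_sig _ _) l). intros y hy.
        apply (in_map (@proj1_sig _ _) _ (exist _ y (h1 y hy))); auto. }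
      exists (fun a => False_rect X (E a)). intros a; destruct (E a).
    + eapply le_trans; [|apply (gch_succ (seg R j) X G Hi (proj2 HR j))].
      exists (fun a (s : seg R j) => proj1_sig a (proj1_sig s)).
      intros [Q1 [a1 b1]] [Q2 [a2 b2]] E; simpl in E. apply sub_eq; simpl.
      extensionality y. apply propositional_extensionality. split; intros h.
      * pose proof (equal_f E (exist _ y (a1 y h))) as E'. simpl in E'. rewrite <- E'; auto.
      * pose proof (equal_f E (exist _ y (a2 y h))) as E'. simpl in E'. rewrite E'; auto.
  - intros c. destruct (constructive_indefinite_description _ (Hb' c)) as [x hx]; simpl.
    split; auto. apply (proj2_sig c).
  - intros w w' _ E; apply sub_eq; auto.
Qed.

Lemma list_max X (R : X -> X -> Prop) : strict_well_order R -> forall (l : list X) a,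
  exists m, In m (a :: l) /\ forall y, In y (a :: l) -> R y m \/ y = m.
Proof.
  intros [I [T [O _]]] l. induction l as [|b l IH]; intros a.
  - exists a; split; [left; auto|]. intros y [<-|[]]; auto.
  - destruct (IH b) as [m [Hm Hall]].
    destruct (O a m) as [h|[h|h]].
    + exists m; split; [right; auto|]. intros y [<-|hy]; auto.
    + subst; exists m; split; [left; auto|]. intros y [<-|hy]; auto.
    + exists a; split; [left; auto|]. intros y [<-|hy]; auto.
      destruct (Hall y hy) as [h'| ->]; eauto.
Qed.

Lemma cofinal_inf M (R : M -> M -> Prop) S : initial_well_order R -> infinite_type M ->
  cofinal_in R S -> infinite_set S.
Proof.
  intros HR HM CS [l Hl].
  destruct (inf_nat _ HM) as [f _].
  destruct (CS (f 0)) as [a [Sa _]].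
  destruct (list_max M R (proj1 HR) l a) as [m [Hm Hall]].
  destruct (no_max M R HR HM m) as [t Rt].
  destruct (CS t) as [y [Sy Hy]].
  assert (Iy : In y (a :: l)) by (right; auto).
  destruct HR as [[I [T [O _]]] _].
  destruct (Hall y Iy) as [h|h]; destruct Hy as [h'|h']; subst.
  - apply (I m). apply (T _ _ _ Rt). apply (T _ _ _ h' h).
  - apply (I m). apply (T _ _ _ Rt h).
  - apply (I m). apply (T _ _ _ Rt h').
  - apply (I m Rt).
Qed.

Lemma cf_nat M (R : M -> M -> Prop) P : initial_well_order R -> infinite_type M ->
  eq_card (sub P) nat -> cofinal_in R P -> is_cf M nat.
Proof.
  intros HR HM EP CP. exists R; split; auto. split.
  - exists P; auto.
  - intros S CS. apply inf_nat, infset_type. eapply cofinal_inf; eauto.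
Qed.

Lemma cf_dich M : GCH -> infinite_type M -> le_card (CS M) M \/ is_cf M nat.
Proof.
  intros G HM. destruct (init_exists M) as [R HR].
  destruct (classic (forall P, eq_card (sub P) nat -> exists x, forall y, P y -> R y x)) as [H|H].
  - left; eapply cs_le; eauto.
  - right. apply not_all_ex_not in H as [P H]. apply imply_to_and in H as [EP NB].
    apply (cf_nat M R P HR HM EP).
    intros x. apply NNPP; intros N. apply NB. exists x. intros y Py.
    destruct HR as [[I [T [O _]]] _].
    destruct (O y x) as [h|[h|h]]; auto; exfalso; apply N; eauto.
Qed.

Lemma infset_mono X (S T : X -> Prop) : (forall x, S x -> T x) -> infinite_set S -> infinite_set T.
Proof. intros H HS [l Hl]; apply HS; exists l; auto. Qed.

Lemma sum_le M X Y : infinite_type M -> le_card X M -> le_card Y M -> le_card (X + Y) M.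
Proof.
  intros HM H1 H2. eapply le_trans; [|apply (prod_le M (option M) (option M)); auto; apply opt_le; auto].
  destruct H1 as [f Hf], H2 as [g Hg].
  exists (fun s => match s with inl x => (Some (f x), None) | inr y => (None, Some (g y)) end).
  intros [a|a] [b|b] E; injection E; intros; subst; try discriminate; f_equal; auto.
Qed.

Lemma or_le X (P Q : X -> Prop) : le_card (sub (fun x => P x \/ Q x)) (sub P + sub Q).
Proof.
  exists (fun w => match excluded_middle_informative (P (proj1_sig w)) with
          | left h => inl (exist P _ h)
          | right h => inr (exist Q _ (match proj2_sig w with or_introl p => False_ind _ (h p) | or_intror q => q end)) end).
  intros a b.
  destruct (excluded_middle_informative (P (proj1_sig a)));
  destruct (excluded_middle_informative (P (proj1_sig b))); intros E; try discriminate;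
  injection E; intros E'; apply sub_eq; auto.
Qed.

Lemma split_le X (P : X -> Prop) : le_card X (sub P + sub (fun x => ~ P x)).
Proof.
  exists (fun x => match excluded_middle_informative (P x) with
          | left h => inl (exist P x h) | right h => inr (exist _ x h) end).
  intros a b.
  destruct (excluded_middle_informative (P a)); destruct (excluded_middle_informative (P b));
  intros E; try discriminate; injection E; auto.
Qed.

Section Main.
Variable G : GCH.
Variables (A B : Type) (E : A -> B -> Prop).
Hypothesis HA : infinite_type A.
Hypothesis HB : infinite_type B.
Hypothesis HAB : lt_card A B.
Hypothesis Excl : ~ (exists (CF M : Type), is_cf B CF /\ is_succ_card M CF /\ is_cf M nat).
Hypothesis Hbip : bip_graph E.
Variables (R : B -> B -> Prop) (S0 : B -> Prop).
Hypothesis Hcf : cf_data R S0.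
Definition DD (C : A -> Prop) := fun b => infinite_set (fun a => C a /\ E a b).
Hypothesis K1 : forall C, eq_card (sub C) nat -> lt_card (sub (DD C)) B.

Lemma excl_use M : lt_card M (sub S0) -> (forall Z, lt_card M Z -> le_card (sub S0) Z) ->
  is_cf M nat -> False.
Proof.
  intros H1 H2 H3. apply Excl. exists (sub S0), M. split; [apply (cf_is_cf B R S0 Hcf)|].
  split; auto. split; auto.
Qed.

Lemma CSA : lt_card (CS A) B.
Proof.
  destruct Hcf as [HR [C0 M0]].
  apply lt_iff; intros hB.
  assert (Succ : forall Z, lt_card A Z -> le_card B Z).
  { intros Z HZ. eapply le_trans; [exact hB|]. eapply le_trans; [apply le_sub|].
    apply gch_succ; auto. }
  destruct (cf_dich A G HA) as [h|h].
  - apply (proj2 HAB). eapply le_trans; eauto.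
  - apply (excl_use A); auto.
    + apply lt_iff; intros hI. apply (proj2 HAB).
      assert (Hc : forall b, exists s : sub S0, R b (proj1_sig s) \/ b = proj1_sig s).
      { intros b. destruct (C0 b) as [y [Sy Hy]]. exists (exist _ y Sy); auto. }
      eapply le_trans; [|apply (prod_le A (sub S0) A HA hI (le_refl A))].
      apply (sigma_le B (sub S0) A B (fun s b => R b (proj1_sig s) \/ b = proj1_sig s)
               (fun b => proj1_sig (constructive_indefinite_description _ (Hc b))) (fun b => b)).
      * intros s. apply nlt_le. intros hl. apply (proj2 (cseg_lt B R HR HB (proj1_sig s))).
        apply Succ; auto.
      * intros b. destruct (constructive_indefinite_description _ (Hc b)); auto.
      * auto.
    + intros Z HZ. eapply le_trans; [apply le_sub|]. apply Succ; auto.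
Qed.

Variable RI : sub S0 -> sub S0 -> Prop.
Hypothesis HRI : initial_well_order RI.

Definition Good (i : sub S0) (Gf : sub S0 -> (A -> Prop) * (B -> Prop)) (p : (A -> Prop) * (B -> Prop)) :=
  eq_card (sub (fst p)) nat /\
  (forall b, snd p b -> infinite_set (fun a => fst p a /\ E a b)) /\
  lt_card (sub (snd p)) B /\
  le_card (option (seg R (proj1_sig i))) (sub (snd p)) /\
  (forall j, RI j i -> (forall a, ~ (fst (Gf j) a /\ fst p a)) /\ (forall b, ~ (snd (Gf j) b /\ snd p b))).

Lemma step i Gf : (forall j, RI j i -> eq_card (sub (fst (Gf j))) nat /\ lt_card (sub (snd (Gf j))) B) ->
  exists p, Good i Gf p.
Proof.
  intros Hprev.
  pose proof Hcf as [HR [C0 M0]].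
  set (U := fun a => exists j, RI j i /\ fst (Gf j) a).
  set (P := fun b => exists j, RI j i /\ snd (Gf j) b).
  assert (HP : lt_card (sub P) B).
  { eapply le_lt_trans; [|apply (union_lt B R S0 (seg RI i) (fun j b => snd (Gf (proj1_sig j)) b) Hcf HB
        (proj2 HRI i) (fun j => proj2 (Hprev _ (proj2_sig j))))].
    apply le_sub_sub. intros b [j [r h]]. exists (exist _ j r); auto. }
  set (Q := fun b => infinite_set (fun a => U a /\ E a b)).
  assert (HUle : le_card (sub U) (seg RI i * nat)).
  { assert (Hw : forall w : sub U, exists j : seg RI i, fst (Gf (proj1_sig j)) (proj1_sig w)).
    { intros [a [j [r h]]]. exists (exist _ j r); auto. }
    apply (sigma_le (sub U) (seg RI i) nat A (fun j a => fst (Gf (proj1_sig j)) a)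
              (fun w => proj1_sig (constructive_indefinite_description _ (Hw w))) (@proj1_sig _ _)).
    - intros j. apply eq_le, (Hprev _ (proj2_sig j)).
    - intros w. destruct (constructive_indefinite_description _ (Hw w)); auto.
    - intros w w' _ e; apply sub_eq; auto. }
  assert (HQ : lt_card (sub Q) B).
  { destruct (classic (le_card (sub S0) nat)) as [Hn|Hn].
    -
      assert (HU : le_card (sub U) nat).
      { eapply le_trans; [exact HUle|]. apply prod_le; [apply nat_inf'| |apply le_refl].
        eapply le_trans; [apply le_sub|exact Hn]. }
      assert (HAt : infinite_set (fun _ : A => True)).
      { apply type_infset. eapply le_inf; [|exact HA]. exists (fun a => exist (fun _ : A => True) a I).
        intros a b e; injection e; auto. }
      destruct (infset_cnt A _ HAt) as [N [_ HN]].
      set (U' := fun a => U a \/ N a).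
      assert (HU' : eq_card (sub U') nat).
      { apply CB.
        - eapply le_trans; [apply or_le|]. apply sum_le; [apply nat_inf'|auto|apply eq_le; auto].
        - eapply le_trans; [apply eq_ge, HN|]. apply le_sub_sub; unfold U'; auto. }
      eapply le_lt_trans; [|apply (K1 U' HU')].
      apply le_sub_sub. intros b Hb. unfold DD. eapply infset_mono; [|exact Hb].
      intros a [h1 h2]; split; auto; left; auto.
    -
      assert (HnI : le_card nat (sub S0)) by (destruct (comparable nat (sub S0)); auto; contradiction).
      assert (HIinf : infinite_type (sub S0)) by (apply nat_inf; auto).
      assert (HUI : lt_card (sub U) (sub S0)).
      { eapply le_lt_trans; [exact HUle|]. apply prod_lt; auto. apply (proj2 HRI). apply lt_iff; auto. }
      assert (CSU : lt_card (CS (sub U)) (sub S0)).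
      { apply lt_iff; intros hI.
        destruct (classic (finite_type (sub U))) as [Hf|Hinf].
        - destruct hI as [g _]. destruct (g i) as [c hc].
          apply (cnt_infset _ _ hc). destruct Hf as [l Hl]. exists l; auto.
        - destruct (cf_dich (sub U) G Hinf) as [h|h].
          + apply (proj2 HUI). eapply le_trans; eauto.
          + apply (excl_use (sub U)); auto.
            intros Z HZ. eapply le_trans; [exact hI|]. eapply le_trans; [apply le_sub|].
            apply gch_succ; auto. }
      set (lift := fun (c : CS (sub U)) (a : A) => exists h : U a, proj1_sig c (exist U a h)).
      assert (Hlift : forall c, eq_card (sub (lift c)) nat).
      { intros c. eapply eq_trans; [|apply (proj2_sig c)].
        apply CB.
        - assert (Hx : forall w : sub (lift c), exists h : U (proj1_sig w), proj1_sig c (exist U _ h)).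
          { intros [a ha]; auto. }
          exists (fun w => exist (proj1_sig c) (exist U (proj1_sig w) (proj1_sig (constructive_indefinite_description _ (Hx w))))
                              (proj2_sig (constructive_indefinite_description _ (Hx w)))).
          intros a b e. injection e; intros e'. apply sub_eq; auto.
        - assert (Lin : forall s : sub U, proj1_sig c s -> lift c (proj1_sig s)).
          { intros [a ha] hs. exists ha; auto. }
          exists (fun w => exist (lift c) (proj1_sig (proj1_sig w)) (Lin _ (proj2_sig w))).
          intros a b e. injection e; intros e'. apply sub_eq, sub_eq; auto. }
      eapply le_lt_trans; [|apply (union_lt B R S0 (CS (sub U)) (fun c => DD (lift c)) Hcf HB CSU
                                    (fun c => K1 _ (Hlift c)))].
      apply le_sub_sub. intros b Hb.
      assert (HT : infinite_set (fun s : sub U => E (proj1_sig s) b)).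
      { intros [l Hl]. apply Hb. exists (map (@proj1_sig _ _) l). intros a [ua ea].
        apply (in_map (@proj1_sig _ _) _ (exist U a ua)). apply Hl; auto. }
      destruct (infset_cnt _ _ HT) as [Pc [HPc1 HPc2]].
      exists (exist _ Pc HPc2). unfold DD.
      eapply infset_mono; [|apply (cnt_infset _ _ (Hlift (exist _ Pc HPc2)))].
      intros a Ha. split; auto. destruct Ha as [h Ha]. apply (HPc1 _ Ha).
  }
  assert (HPQ : lt_card (sub (fun b => P b \/ Q b)) B).
  { eapply le_lt_trans; [apply or_le|apply sum_lt; auto]. }
  set (B' := fun b => ~ P b /\ ~ Q b).
  assert (HN' : forall b, B' b -> exists Pc : A -> Prop, (forall a, Pc a -> E a b /\ ~ U a) /\ eq_card (sub Pc) nat).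
  { intros b [nP nQ]. apply infset_cnt. intros [l Hl].
    apply NNPP in nQ. destruct nQ as [l' Hl'].
    apply (Hbip b). exists (l ++ l'). intros a Ea. apply in_or_app.
    destruct (classic (U a)); [right; apply Hl'; auto | left; apply Hl; auto]. }
  set (Nsp := fun b (h : B' b) => proj1_sig (constructive_indefinite_description _ (HN' b h))).
  assert (HNsp : forall b h, (forall a, Nsp b h a -> E a b /\ ~ U a) /\ eq_card (sub (Nsp b h)) nat).
  { intros b h; unfold Nsp; destruct (constructive_indefinite_description _ _); auto. }
  set (tau := option (seg R (proj1_sig i))).
  assert (Htau : lt_card tau B) by (apply opt_lt; auto; apply (proj2 HR)).
  set (F := fun (c : CS A) b => exists h : B' b, Nsp b h = proj1_sig c).
  assert (Hex : exists c, le_card tau (sub (F c))).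
  { apply NNPP; intros N.
    assert (HB' : lt_card (sub B') B).
    { eapply le_lt_trans; [|apply (prod_lt B (CS A) tau HB CSA Htau)].
      apply (sigma_le (sub B') (CS A) tau B F
               (fun w => exist _ (Nsp _ (proj2_sig w)) (proj2 (HNsp _ (proj2_sig w)))) (@proj1_sig _ _)).
      - intros c. apply nlt_le. intros [h _]. apply N; eauto.
      - intros w. exists (proj2_sig w). reflexivity.
      - intros w w' _ e; apply sub_eq; auto. }
    apply (lt_irrefl B). eapply le_lt_trans; [apply (split_le B B')|].
    apply sum_lt; auto. eapply le_lt_trans; [|exact HPQ]. apply le_sub_sub. intros b hb.
    unfold B' in hb. destruct (classic (P b)); auto. right; apply NNPP; intros nq; apply hb; auto. }
  destruct Hex as [c Hc].
  assert (HF : forall b, F c b -> forall a, proj1_sig c a -> E a b /\ ~ U a).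
  { intros b [h e] a ha. rewrite <- e in ha. apply (proj1 (HNsp b h)); auto. }
  assert (HFB' : forall b, F c b -> B' b) by (intros b [h _]; auto).
  assert (HFinf : forall b, F c b -> infinite_set (fun a => proj1_sig c a /\ E a b)).
  { intros b hb. eapply infset_mono; [|apply (cnt_infset _ _ (proj2_sig c))].
    intros a ha; split; auto; apply (HF b hb a ha). }
  exists (proj1_sig c, F c). unfold Good; simpl.
  split; [apply (proj2_sig c)|]. split; [auto|]. split.
  - eapply le_lt_trans; [|apply (K1 _ (proj2_sig c))]. apply le_sub_sub. intros b hb; apply HFinf; auto.
  - split; [exact Hc|].
    intros j r. split.
    + intros a [h1 h2]. destruct Hc as [g _]. set (b0 := g None).
      apply (proj2 (HF _ (proj2_sig b0) a h2)). exists j; auto.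
    + intros b [h1 h2]. apply (proj1 (HFB' b h2)). exists j; auto.
Qed.

Definition dflt : (A -> Prop) * (B -> Prop) := (fun _ => False, fun _ => False).
Definition mkp (Pr : (A -> Prop) * (B -> Prop) -> Prop) :=
  match excluded_middle_informative (exists p, Pr p) with
  | left h => proj1_sig (constructive_indefinite_description _ h) | right _ => dflt end.
Lemma mkp_spec Pr : (exists p, Pr p) -> Pr (mkp Pr).
Proof.
  intros H; unfold mkp; destruct (excluded_middle_informative _) as [h|h]; [|contradiction].
  destruct (constructive_indefinite_description _ h); auto.
Qed.

Lemma Good_ext i g h : (forall j, RI j i -> g j = h j) -> Good i g = Good i h.
Proof.
  intros H. extensionality p. apply propositional_extensionality. unfold Good.
  split; intros [a [b [c [d e]]]]; (split; [exact a|split; [exact b|split; [exact c|split; [exact d|]]]]);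
    intros j r; specialize (e j r); [rewrite <- (H j r)|rewrite (H j r)]; exact e.
Qed.

Lemma family : exists f : sub S0 -> (A -> Prop) * (B -> Prop), forall i, Good i f (f i).
Proof.
  pose proof HRI as [[I1 [T1 [O1 W1]]] _].
  destruct (wf_rec (sub S0) _ RI W1 dflt (fun i g => mkp (Good i g))) as [f Hf].
  { intros x g h H. rewrite (Good_ext x g h H). reflexivity. }
  exists f. intros i. induction (W1 i) as [i _ IH]. rewrite (Hf i).
  apply mkp_spec, step. intros j r. destruct (IH j r) as [a [_ [c _]]]. split; auto.
Qed.

Lemma D2 : exists (I : Type) (C : I -> A -> Prop) (D : I -> B -> Prop),
        is_cf B I /\
        (forall i, aleph0_subgraph E (C i) (D i) (sub (D i))) /\
        (forall i j, i <> j ->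
           (forall a, ~ (C i a /\ C j a)) /\ (forall b, ~ (D i b /\ D j b))) /\
        (forall i, lt_card (sub (D i)) B) /\
        (forall Z : Type, lt_card Z B -> exists i, le_card Z (sub (D i))).
Proof.
  destruct family as [f Hf].
  pose proof Hcf as [HR [C0 M0]].
  pose proof HRI as [[I1 [T1 [O1 W1]]] _].
  exists (sub S0), (fun i => fst (f i)), (fun i => snd (f i)).
  split; [apply (cf_is_cf B R S0 Hcf)|].
  split; [|split; [|split]].
  - intros i. destruct (Hf i) as [a [b _]]. split; [auto|split; [apply eq_refl'|auto]].
  - intros i j nij. destruct (O1 i j) as [r|[e|r]]; [|contradiction|].
    + destruct (Hf j) as [_ [_ [_ [_ e]]]]. destruct (e i r) as [e1 e2]. split; auto.
    + destruct (Hf i) as [_ [_ [_ [_ e]]]]. destruct (e j r) as [e1 e2].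
      split; intros x [h1 h2]; [apply (e1 x)|apply (e2 x)]; auto.
  - intros i. destruct (Hf i) as [_ [_ [c _]]]; auto.
  - intros Z HZ. destruct (seg_of_lt B R Z HR HZ) as [x Ex].
    destruct (C0 x) as [y [Sy Hy]]. exists (exist _ y Sy).
    destruct (Hf (exist _ y Sy)) as [_ [_ [_ [d _]]]]. simpl in d.
    eapply le_trans; [|exact d]. eapply le_trans; [apply eq_le, Ex|].
    eapply le_trans; [|apply le_opt]. apply le_sub_sub.
    pose proof HR as [[I2 [T2 _]] _].
    intros z hz. destruct Hy as [h| <-]; eauto.
Qed.
End Main.

Theorem lemma4p6 :
  GCH ->
  forall (A B : Type) (E : A -> B -> Prop),
    infinite_type A -> infinite_type B -> lt_card A B ->
    (* cf(kappa) is not of the form mu^+ with cf(mu) = omega *)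
    ~ (exists (CF M : Type), is_cf B CF /\ is_succ_card M CF /\ is_cf M nat) ->
    bip_graph E ->
    (exists (C : A -> Prop) (D : B -> Prop), aleph0_subgraph E C D B)
    \/
    (exists (I : Type) (C : I -> A -> Prop) (D : I -> B -> Prop),
        is_cf B I /\
        (forall i, aleph0_subgraph E (C i) (D i) (sub (D i))) /\
        (forall i j, i <> j ->
           (forall a, ~ (C i a /\ C j a)) /\ (forall b, ~ (D i b /\ D j b))) /\
        (forall i, lt_card (sub (D i)) B) /\
        (forall Z : Type, lt_card Z B -> exists i, le_card Z (sub (D i)))).
Proof.
  intros G A B E HA HB HAB Excl Hbip.
  destruct (classic (exists (C : A -> Prop) (D : B -> Prop), aleph0_subgraph E C D B)) as [d|nD1];
    [left; exact d|right].
  assert (K1 : forall C, eq_card (sub C) nat -> lt_card (sub (DD A B E C)) B).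
  { intros C HC. apply lt_iff; intros h. apply nD1. exists C, (DD A B E C).
    split; [auto|split; [apply CB; [apply le_sub|auto]|]]. intros b hb; exact hb. }
  destruct (cf_exists B HB) as [R [S0 Hcf]].
  destruct (init_exists (sub S0)) as [RI HRI].
  eapply D2; eauto.
Qed.
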